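(* Let $x^{(0)}=(x^{(0)}_1,\dots,x^{(0)}_n)\in\mathbb R^n$, let $h_0:=H(x^{(0)})$ and $v_i^{(0)}:=a_1x^{(0)}_1+\dots+a_ix^{(0)}_i$ ($v_0^{(0)}:=0$). Define $f(t):=\dfrac{e^{h_0t}-1}{(e^{h_0t}+1)h_0}=\dfrac1{h_0}\tanh\!\big(\tfrac{h_0t}{2}\big)$ if $h_0\neq0$, and $f(t):=t/2$ if $h_0=0$. Then the solution $x(t)$ of $\dot x_i=x_i\big(\sum_{j>i}a_jx_j-\sum_{j<i}a_jx_j\big)$ ($i=1,\dots,n$) with $x(0)=x^{(0)}$ is given, for $t$ in the interval around $0$ where the denominators do not vanish, by $$x_i(t)=x_i^{(0)}\frac{(1-f(t)h_0)(1+f(t)h_0)}{\big(1-f(t)h_0+2f(t)v^{(0)}_{i-1}\big)\big(1-f(t)h_0+2f(t)v^{(0)}_i\big)},\qquad i=1,\dots,n.$$ Equivalently, when $h_0\ne0$, $x_i(t)=\dfrac{x_i^{(0)}e^{th_0}h_0^2}{\big(h_0+(e^{th_0}-1)v^{(0)}_{i-1}\big)\big(h_0+(e^{th_0}-1)v^{(0)}_i\big)}$.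
   Context: Here $(a_1,\dots,a_n)\in\mathbb R^n\setminus\{0\}$ and $H=a_1x_1+\dots+a_nx_n$. *)

(* Defs.v *)
From Stdlib Require Import Reals Lra.
Open Scope R_scope.

(* Coordinates are indexed 1..n by nat; a, x : nat -> R (values outside 1..n ignored). *)

Fixpoint vsum (a x : nat -> R) (i : nat) : R :=
  match i with
  | O => 0
  | S j => vsum a x j + a (S j) * x (S j)
  end.

Definition Hlin (n : nat) (a x : nat -> R) : R := vsum a x n.

Definition rhs (n : nat) (a x : nat -> R) (i : nat) : R :=
  x i * ((vsum a x n - vsum a x i) - vsum a x (i - 1)).

Definition fsol (h0 t : R) : R :=
  if Req_EM_T h0 0 then t / 2
  else (exp (h0 * t) - 1) / ((exp (h0 * t) + 1) * h0).

Definition den (n : nat) (a x0 : nat -> R) (t : R) (i : nat) : R :=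
  let h0 := Hlin n a x0 in
  let f := fsol h0 t in
  (1 - f * h0 + 2 * f * vsum a x0 (i - 1)) * (1 - f * h0 + 2 * f * vsum a x0 i).

Definition xsol (n : nat) (a x0 : nat -> R) (t : R) (i : nat) : R :=
  let h0 := Hlin n a x0 in
  let f := fsol h0 t in
  x0 i * ((1 - f * h0) * (1 + f * h0)) / den n a x0 t i.

(* t lies in the interval around 0 on which no denominator vanishes:
   for all s between 0 and t and all i in 1..n, den s i <> 0. *)
Definition in_dom (n : nat) (a x0 : nat -> R) (t : R) : Prop :=
  forall s, Rmin 0 t <= s <= Rmax 0 t ->
    forall i, (1 <= i <= n)%nat -> den n a x0 s i <> 0.

(* Main.v *)
Require Import Defs.
From Stdlib Require Import Reals Lra Lia.
From Coquelicot Require Import Coquelicot.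
Open Scope R_scope.

Lemma fsol_deriv h t :
  is_derive (fsol h) t ((1 - fsol h t * h) * (1 + fsol h t * h) / 2).
Proof.
  unfold fsol; destruct (Req_EM_T h 0) as [e|e].
  - subst h. auto_derive; auto. field.
  - assert (Hp : exp (h * t) + 1 <> 0) by (generalize (exp_pos (h*t)); lra).
    auto_derive.
    + apply Rmult_integral_contrapositive; split; auto.
    + field; auto.
Qed.

Lemma fsol0 h : fsol h 0 = 0.
Proof.
  unfold fsol; destruct (Req_EM_T h 0).
  - field.
  - rewrite Rmult_0_r, exp_0. unfold Rdiv. ring.
Qed.

Definition PP n a x0 t j :=
  1 - fsol (Hlin n a x0) t * Hlin n a x0 + 2 * fsol (Hlin n a x0) t * vsum a x0 j.

Lemma vsum_xsol n a x0 t i :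
  (forall j, (j <= i)%nat -> PP n a x0 t j <> 0) ->
  vsum a (xsol n a x0 t) i =
  (1 + fsol (Hlin n a x0) t * Hlin n a x0) * vsum a x0 i / PP n a x0 t i.
Proof.
  induction i as [|i IH]; intros Hnz.
  - simpl. unfold Rdiv. ring.
  - simpl vsum. rewrite IH by (intros; apply Hnz; lia).
    assert (H1 := Hnz i ltac:(lia)). assert (H2 := Hnz (S i) ltac:(lia)).
    unfold PP in *. simpl vsum in H2.
    unfold xsol, den. cbv zeta. replace (S i - 1)%nat with i by lia.
    simpl vsum.
    set (f := fsol (Hlin n a x0) t) in *. set (h := Hlin n a x0) in *.
    set (V := vsum a x0 i) in *.
    field. split; auto.
Qed.

Lemma PP_nz n a x0 t : (1 <= n)%nat -> in_dom n a x0 t ->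
  forall j, (j <= n)%nat -> PP n a x0 t j <> 0.
Proof.
  intros Hn Hd j Hj.
  assert (Hs : Rmin 0 t <= t <= Rmax 0 t) by (split; [apply Rmin_r | apply Rmax_r]).
  destruct j as [|j].
  - assert (D := Hd t Hs 1%nat ltac:(lia)). unfold den in D; cbv zeta in D.
    simpl (1-1)%nat in D. intro Hc; apply D. unfold PP in Hc. rewrite Hc. ring.
  - assert (D := Hd t Hs (S j) ltac:(lia)). unfold den in D; cbv zeta in D.
    intro Hc; apply D. unfold PP in Hc. rewrite Hc. ring.
Qed.

Theorem proposition2p6 (n : nat) (a x0 : nat -> R)
  (ha : exists i, (1 <= i <= n)%nat /\ a i <> 0) :
  (forall i, (1 <= i <= n)%nat -> xsol n a x0 0 i = x0 i) /\
  (forall t, in_dom n a x0 t ->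
     forall i, (1 <= i <= n)%nat ->
       derivable_pt_lim (fun s => xsol n a x0 s i) t
         (rhs n a (xsol n a x0 t) i)) /\
  (Hlin n a x0 <> 0 ->
     forall t, in_dom n a x0 t ->
     forall i, (1 <= i <= n)%nat ->
       xsol n a x0 t i =
         x0 i * exp (t * Hlin n a x0) * (Hlin n a x0) ^ 2 /
         ((Hlin n a x0 + (exp (t * Hlin n a x0) - 1) * vsum a x0 (i - 1)) *
          (Hlin n a x0 + (exp (t * Hlin n a x0) - 1) * vsum a x0 i))).
Proof.
  assert (Hn : (1 <= n)%nat) by (destruct ha as [k [Hk _]]; lia).
  split; [|split].
  - intros i Hi. unfold xsol, den. cbv zeta. rewrite fsol0. field.
  - intros t Hd i Hi.
    assert (Hz := PP_nz n a x0 t Hn Hd).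
    assert (P1 := Hz (i-1)%nat ltac:(lia)). assert (P2 := Hz i ltac:(lia)).
    assert (P3 := Hz n ltac:(lia)).
    apply is_derive_Reals.
    set (h := Hlin n a x0).
    set (V' := vsum a x0 (i-1)). set (V := vsum a x0 i).
    set (G := fun F => x0 i * ((1 - F * h) * (1 + F * h)) /
                 ((1 - F * h + 2 * F * V') * (1 - F * h + 2 * F * V))).
    set (F0 := fsol h t).
    assert (HG : is_derive G F0
      (x0 i * (((-h) * (1 + F0*h) + (1 - F0*h) * h) *
          ((1 - F0 * h + 2 * F0 * V') * (1 - F0 * h + 2 * F0 * V))
        - ((1 - F0 * h) * (1 + F0 * h)) *
          ((-h + 2*V') * (1 - F0 * h + 2 * F0 * V) +
           (1 - F0 * h + 2 * F0 * V') * (-h + 2 * V)))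
       / ((1 - F0 * h + 2 * F0 * V') * (1 - F0 * h + 2 * F0 * V))^2)).
    { unfold PP in P1, P2. fold h F0 V V' in P1, P2.
      unfold G. auto_derive.
      - apply Rmult_integral_contrapositive; split; auto.
      - field. split; auto. }
    assert (HC := is_derive_comp G (fsol h) t _ _ HG (fsol_deriv h t)).
    eapply is_derive_ext. { intro s. reflexivity. }
    unfold rhs. rewrite !vsum_xsol by (intros; apply Hz; lia).
    replace (xsol n a x0 t i) with (G F0) by reflexivity.
    unfold scal in HC; simpl in HC; unfold mult in HC; simpl in HC.
    unfold PP in *. fold h F0 V V' in P1, P2, P3 |- *. fold F0 in HC.
    change (Hlin n a x0) with h. fold V V'. change (vsum a x0 n) with h in P3 |- *.
    replace (vsum a x0 n) with h by reflexivity.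
    match goal with |- is_derive _ _ ?l => match type of HC with is_derive _ _ ?l' =>
      replace l with l'; [exact HC|] end end.
    unfold G. field. repeat split; auto.
  - intros Hh t Hd i Hi.
    assert (Hz := PP_nz n a x0 t Hn Hd).
    assert (P1 := Hz (i-1)%nat ltac:(lia)). assert (P2 := Hz i ltac:(lia)).
    unfold PP in P1, P2. unfold xsol, den. cbv zeta.
    set (h := Hlin n a x0) in *.
    set (V' := vsum a x0 (i-1)) in *. set (V := vsum a x0 i) in *.
    rewrite (Rmult_comm t h).
    unfold fsol in *. destruct (Req_EM_T h 0) as [e|_]; [contradiction|].
    set (E := exp (h * t)) in *.
    assert (HE : E + 1 <> 0) by (unfold E; generalize (exp_pos (h*t)); lra).
    assert (Q1 : h + (E - 1) * V' <> 0).
    { intro Hc; apply P1.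
      replace (1 - (E - 1) / ((E + 1) * h) * h + 2 * ((E - 1) / ((E + 1) * h)) * V')
        with (2 * (h + (E - 1) * V') / ((E + 1) * h)) by (field; auto).
      rewrite Hc. unfold Rdiv. ring. }
    assert (Q2 : h + (E - 1) * V <> 0).
    { intro Hc; apply P2.
      replace (1 - (E - 1) / ((E + 1) * h) * h + 2 * ((E - 1) / ((E + 1) * h)) * V)
        with (2 * (h + (E - 1) * V) / ((E + 1) * h)) by (field; auto).
      rewrite Hc. unfold Rdiv. ring. }
    field. repeat split; auto.
    - replace ((E + 1 - (E - 1)) * h + 2 * (E - 1) * V) with (2 * (h + (E - 1) * V)) by ring.
      apply Rmult_integral_contrapositive; split; auto; lra.
    - replace ((E + 1 - (E - 1)) * h + 2 * (E - 1) * V') with (2 * (h + (E - 1) * V')) by ring.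
      apply Rmult_integral_contrapositive; split; auto; lra.
Qed.
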